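(* Let $(X,d)$ be a complete metric space and let $\mathcal{F}=\{X; f_{\lambda}\mid\lambda\in\Lambda\}$ be a parameterized iterated function system which is uniformly contracting. Then $\mathcal{F}$ has the average shadowing property on $\mathbb{Z}_+$.
   Context: A parameterized iterated function system (IFS) $\mathcal{F}=\{X; f_{\lambda}\mid\lambda\in\Lambda\}$ on a complete metric space $(X,d)$ is a family of continuous maps $f_\lambda:X\to X$ indexed by a finite nonempty set $\Lambda$. It is uniformly contracting if $\beta=\sup_{\lambda\in\Lambda}\sup_{x\ne y}\frac{d(f_\lambda(x),f_\lambda(y))}{d(x,y)}$ exists and $\beta<1$. For $\sigma=(\lambda_0,\lambda_1,\dots)\in\Lambda^{\mathbb{Z}_+}$ write $\mathcal{F}_{\sigma_n}=f_{\lambda_{n-1}}\circ\cdots\circ f_{\lambda_0}$ for $n\ge1$ and $\mathcal{F}_{\sigma_0}=\mathrm{id}_X$. For $\delta>0$, a sequence $(x_i)_{i\ge0}$ in $X$ is a $\delta$-average pseudo-orbit of $\mathcal{F}$ if there exist a natural number $N$ and $\sigma=(\lambda_0,\lambda_1,\dots)\in\Lambda^{\mathbb{Z}_+}$ such that for all $n\ge N$, $\frac1n\sum_{i=0}^{n-1}d(f_{\lambda_i}(x_i),x_{i+1})<\delta$. A sequence $(x_i)_{i\ge0}$ is $\epsilon$-shadowed in average by $z\in X$ if there exists $\sigma\in\Lambda^{\mathbb{Z}_+}$ with $\limsup_{n\to\infty}\frac1n\sum_{i=0}^{n-1}d(\mathcal{F}_{\sigma_i}(z),x_i)<\epsilon$.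 $\mathcal{F}$ has the average shadowing property (on $\mathbb{Z}_+$) if for every $\epsilon>0$ there is $\delta>0$ such that every $\delta$-average pseudo-orbit of $\mathcal{F}$ is $\epsilon$-shadowed in average by some point of $X$. *)

(* Defs.v *)
From Stdlib Require Import Reals List.
From Coquelicot Require Import Coquelicot.
Open Scope R_scope.

Record MetricSpace := {
  carrier :> Type;
  dist : carrier -> carrier -> R;
  dist_nonneg : forall x y, 0 <= dist x y;
  dist_eq0 : forall x y, dist x y = 0 <-> x = y;
  dist_sym : forall x y, dist x y = dist y x;
  dist_tri : forall x y z, dist x z <= dist x y + dist y z
}.

Definition cauchy_seq (M : MetricSpace) (u : nat -> M) : Prop :=
  forall eps, 0 < eps -> exists N, forall m n, (N <= m)%nat -> (N <= n)%nat ->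
    dist M (u m) (u n) < eps.

Definition converges_to (M : MetricSpace) (u : nat -> M) (l : M) : Prop :=
  forall eps, 0 < eps -> exists N, forall n, (N <= n)%nat -> dist M (u n) l < eps.

Definition complete (M : MetricSpace) : Prop :=
  forall u : nat -> M, cauchy_seq M u -> exists l, converges_to M u l.

Definition metric_continuous (M : MetricSpace) (f : M -> M) : Prop :=
  forall x eps, 0 < eps -> exists delta, 0 < delta /\
    forall y, dist M x y < delta -> dist M (f x) (f y) < eps.

Definition finite_nonempty (Lam : Type) : Prop :=
  (exists l : list Lam, forall a : Lam, In a l) /\ inhabited Lam.

Definition uniformly_contracting (M : MetricSpace) (Lam : Type) (f : Lam -> M -> M) : Prop :=
  exists beta : R,
    is_lub (fun r => exists (lam : Lam) (x y : M), x <> y /\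
              r = dist M (f lam x) (f lam y) / dist M x y) beta
    /\ beta < 1.

Fixpoint rsum (g : nat -> R) (n : nat) : R :=
  match n with
  | O => 0
  | S k => rsum g k + g k
  end.

Fixpoint Fsigma (M : MetricSpace) (Lam : Type) (f : Lam -> M -> M)
    (sigma : nat -> Lam) (n : nat) (x : M) : M :=
  match n with
  | O => x
  | S k => f (sigma k) (Fsigma M Lam f sigma k x)
  end.

Definition avg_pseudo_orbit (M : MetricSpace) (Lam : Type) (f : Lam -> M -> M)
    (delta : R) (xs : nat -> M) : Prop :=
  exists (N : nat) (sigma : nat -> Lam), forall n : nat, (N <= n)%nat ->
    / INR n * rsum (fun i => dist M (f (sigma i) (xs i)) (xs (S i))) n < delta.

Definition avg_shadowed (M : MetricSpace) (Lam : Type) (f : Lam -> M -> M)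
    (eps : R) (xs : nat -> M) (z : M) : Prop :=
  exists sigma : nat -> Lam,
    Rbar_lt (LimSup_seq (fun n => / INR n *
               rsum (fun i => dist M (Fsigma M Lam f sigma i z) (xs i)) n))
            (Finite eps).

Definition average_shadowing (M : MetricSpace) (Lam : Type) (f : Lam -> M -> M) : Prop :=
  forall eps, 0 < eps -> exists delta, 0 < delta /\
    forall xs : nat -> M, avg_pseudo_orbit M Lam f delta xs ->
      exists z : M, avg_shadowed M Lam f eps xs z.

(* Main.v *)
Require Import Defs.
From Stdlib Require Import Reals List Lra Lia.
From Coquelicot Require Import Coquelicot.
Open Scope R_scope.

Lemma rsum_nonneg (g : nat -> R) n : (forall i, 0 <= g i) -> 0 <= rsum g n.
Proof. intros H; induction n; simpl; [lra|]. specialize (H n); lra. Qed.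

Lemma contr_bound (M : MetricSpace) (Lam : Type) (f : Lam -> M -> M) :
  uniformly_contracting M Lam f ->
  exists b, 0 <= b < 1 /\ forall lam x y, Defs.dist M (f lam x) (f lam y) <= b * Defs.dist M x y.
Proof.
  intros [beta [[Hub Hl] Hb]].
  exists (Rmax beta 0). split. split; [apply Rmax_r|]. apply Rmax_lub_lt; lra.
  intros lam x y.
  destruct (Req_dec (Defs.dist M x y) 0) as [E|E].
  - apply Defs.dist_eq0 in E. subst y.
    assert (Defs.dist M (f lam x) (f lam x) = 0) by (apply Defs.dist_eq0; reflexivity).
    rewrite H. assert (Defs.dist M x x = 0) by (apply Defs.dist_eq0; reflexivity). rewrite H0. lra.
  - assert (Hp : 0 < Defs.dist M x y) by (pose proof (dist_nonneg M x y); lra).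
    assert (Hne : x <> y) by (intro; subst; apply E, dist_eq0; reflexivity).
    assert (Hr : Defs.dist M (f lam x) (f lam y) / Defs.dist M x y <= beta)
      by (apply Hub; exists lam, x, y; auto).
    apply Rmult_le_reg_r with (/ Defs.dist M x y).
    { apply Rinv_0_lt_compat; lra. }
    replace (Rmax beta 0 * Defs.dist M x y * / Defs.dist M x y) with (Rmax beta 0) by (field; lra).
    pose proof (Rmax_l beta 0). unfold Rdiv in Hr. lra.
Qed.

Theorem mainTheorem2 (M : MetricSpace) (Lam : Type) (f : Lam -> M -> M)
  (Hcomplete : complete M)
  (Hfin : finite_nonempty Lam)
  (Hcont : forall lam, metric_continuous M (f lam))
  (Hcontr : uniformly_contracting M Lam f) :
  average_shadowing M Lam f.
Proof.
  destruct (contr_bound M Lam f Hcontr) as [b [Hb Hc]].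
  intros eps Heps. exists (eps * (1 - b) / 2). split.
  { apply Rmult_lt_0_compat; [apply Rmult_lt_0_compat|]; lra. }
  intros xs [N [sigma HN]]. exists (xs 0%nat), sigma.
  set (D := fun i => Defs.dist M (Fsigma M Lam f sigma i (xs 0%nat)) (xs i)).
  set (e := fun i => Defs.dist M (f (sigma i) (xs i)) (xs (S i))).
  assert (HD : forall n, rsum D (S n) <= b * rsum D n + rsum e n).
  { induction n.
    - simpl. unfold D. simpl. assert (Defs.dist M (xs 0%nat) (xs 0%nat) = 0) by (apply Defs.dist_eq0; auto).
      rewrite H. lra.
    - change (rsum D (S (S n))) with (rsum D (S n) + D (S n)).
      change (rsum D (S n)) with (rsum D n + D n) at 2.
      change (rsum e (S n)) with (rsum e n + e n).
      assert (D (S n) <= b * D n + e n).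
      { unfold D, e. simpl.
        eapply Rle_trans. apply Defs.dist_tri with (y := f (sigma n) (xs n)).
        specialize (Hc (sigma n) (Fsigma M Lam f sigma n (xs 0%nat)) (xs n)). lra. }
      lra. }
  assert (HS : forall n, rsum D n * (1 - b) <= rsum e n).
  { intro n. specialize (HD n). simpl in HD.
    assert (0 <= D n) by apply Defs.dist_nonneg. nra. }
  assert (Hle : Rbar_le (LimSup_seq (fun n => / INR n * rsum D n)) (eps / 2)).
  { replace (Finite (eps / 2)) with (LimSup_seq (fun _ => eps / 2)).
    2:{ apply is_LimSup_seq_unique, is_LimSup_seq_const. }
    apply LimSup_le. exists (S N). intros n Hn.
    specialize (HN n ltac:(lia)). fold e in HN.
    assert (Hn0 : 0 < INR n) by (apply lt_0_INR; lia).
    specialize (HS n).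
    assert (He : rsum e n < eps * (1 - b) / 2 * INR n).
    { apply Rmult_lt_reg_l with (/ INR n). apply Rinv_0_lt_compat; lra.
      replace (/ INR n * (eps * (1 - b) / 2 * INR n)) with (eps * (1 - b) / 2) by (field; lra).
      exact HN. }
    assert (rsum D n <= eps / 2 * INR n).
    { apply Rmult_le_reg_r with (1 - b). lra. nra. }
    apply Rmult_le_reg_l with (INR n). lra.
    rewrite <- Rmult_assoc, Rinv_r by lra. lra. }
  fold D. destruct (LimSup_seq (fun n => / INR n * rsum D n)); simpl in *; auto; lra.
Qed.
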